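(* Let $\mathcal G=(\mathcal V,\mathcal E)$ be a weakly connected digraph with $\alpha$ source SCCs and $\beta$ target SCCs, whose nodes are agents running the distributed protocol described in the context. Then the time-complexity of the protocol for any agent $u$ is $\mathcal O(|\mathcal V||\mathcal E|\min\{\alpha,\beta\})$.
   Context: A digraph $\mathcal G=(\mathcal V,\mathcal E)$ has edges $(u,v)$, meaning $v$ receives information from $u$. In-neighbors of $v$: $\mathcal N^-(v)=\{u:(u,v)\in\mathcal E\}$; out-neighbors of $u$: $\mathcal N^+(u)=\{v:(u,v)\in\mathcal E\}$. For a strongly connected component (SCC) $\mathcal S$, let $\mathcal O_{\mathcal S}$ be the set of edges from $\mathcal S$ to $\mathcal V\setminus\mathcal S$ and $\mathcal I_{\mathcal S}$ the set of edges from $\mathcal V\setminus\mathcal S$ into $\mathcal S$. $\mathcal S$ is a source SCC (s-SCC) if $\mathcal O_{\mathcal S}\neq\emptyset,\mathcal I_{\mathcal S}=\emptyset$; a target SCC (t-SCC) if $\mathcal O_{\mathcal S}=\emptyset,\mathcal I_{\mathcal S}\neq\emptyset$; mixed if both nonempty; isolated if both empty. Standing assumptions: each agent has a unique integer ID; each agent knows the IDs of its in- and out-neighbors; an agent knowing another agent's ID can establish a (long-range) connection to it; communication is synchronous in discrete time. The protocol (which solves the minimum cardinality augmentation problem of adding fewest edges to make the digraph strongly connected) proceeds in rounds, each consisting of the following phases, on the current digraph (original edges plus edges added so far). Phase 1 (all agents $u$): $u$ starts knowing its outgoing edges; repeatedly, $u$ sends its newly learned edges to all out-neighbors and adds all edges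 received from in-neighbors to its known set, until no new edges are learned. Then $u$ runs Tarjan's SCC algorithm on its known edges and classifies its own SCC as source, target, mixed or isolated from the known edges. If isolated, $u$ exits. If its SCC is a source SCC and $u$ has the minimum ID in it, $u$ goes to Phase 3; if target SCC and $u$ has minimum ID in it, Phase 2; otherwise $u$ waits for the next round. Phase 2 (target representative $u$): $u$ forms the set $S_u$ of the minimum-ID agents of the source SCCs it knows, sends $S_u$ by long-range communication to every agent of $S_u$, and goes to Phase 4. Phase 3 (source representative $u$): let $P_u$ be the set of target representatives that sent to $u$ in Phase 2. If some $t\in P_u$ has $|S_t|>1$, $u$ selects one such $t$ and sends $P_u$ to $t$; otherwise $u$ adds edges $(t,u)$ for all $t\in P_u$. Then $u$ waits for the next round. Phase 4 (target representative $u$): let $P_u$ be the set of source representatives $s$ that sent to $u$ in Phase 3. If $P_u=\emptyset$, wait. If some $s\in P_u$ has $|P_s|>1$, $u$ selects one such $s$ and adds edge $(u,s)$; otherwise $u$ adds edges $(u,s)$ to each proposing source representative. Then $u$ waits for the next round. Added edges become part of the digraph for subsequent rounds. Time-complexity refers to the local computation performed by agent $u$ over the whole execution. *)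

(* Defs.v *)
From mathcomp Require Import all_boot.
Set Implicit Arguments. Unset Strict Implicit. Unset Printing Implicit Defensive.

(* Agents are the vertices 'I_n; a digraph is a set of ordered pairs
   (u,v) meaning "v receives information from u". *)
Section Protocol.
Variable n : nat.
Notation V := 'I_n.
Notation edges := {set V * V}.

Definition erel (K : edges) : rel V := fun x y => (x, y) \in K.

Definition sccIn (K : edges) (x : V) : {set V} :=
  [set y | connect (erel K) x y && connect (erel K) y x].
Definition outIn (K : edges) (x : V) : {set V * V} :=
  [set e in K | (e.1 \in sccIn K x) && (e.2 \notin sccIn K x)].
Definition inIn (K : edges) (x : V) : {set V * V} :=
  [set e in K | (e.1 \notin sccIn K x) && (e.2 \in sccIn K x)].
Definition is_sourceIn K x := (outIn K x != set0) && (inIn K x == set0).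
Definition is_targetIn K x := (outIn K x == set0) && (inIn K x != set0).
Definition is_isolatedIn K x := (outIn K x == set0) && (inIn K x == set0).

Definition alpha (E : edges) : nat := #|[set sccIn E x | x in [set x | is_sourceIn E x]]|.
Definition beta (E : edges) : nat := #|[set sccIn E x | x in [set x | is_targetIn E x]]|.

Definition weakly_connected (E : edges) : Prop :=
  forall x y, connect (fun a b => ((a, b) \in E) || ((b, a) \in E)) x y.
Definition strongly_connected (E : edges) : Prop :=
  forall x y, connect (erel E) x y.
Definition loopless (E : edges) : Prop := forall x, (x, x) \notin E.

Variable id : V -> nat.
Definition min_id_in (S : {set V}) (x : V) := [forall y in S, id x <= id y].

(* flood F k = (known_k, new_k); known_0 u = new_0 u = outgoing edges of u;
   at step k+1, u adds what its in-neighbours sent (their new_k). *)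
Fixpoint flood (F : edges) (k : nat) : (V -> edges) * (V -> edges) :=
  match k with
  | 0 => (fun u => [set e in F | e.1 == u], fun u => [set e in F | e.1 == u])
  | k'.+1 =>
      let kn := (flood F k').1 in
      let nw := (flood F k').2 in
      let kn' := fun u => kn u :|: \bigcup_(v | (v, u) \in F) nw v in
      (kn', fun u => kn' u :\: kn u)
  end.

Definition stop (F : edges) (u : V) : nat :=
  find (fun k => (flood F k.+1).2 u == set0) (iota 0 n.+1).

Definition Kn (F : edges) (u : V) : edges := (flood F (stop F u)).1 u.

Definition outN (F : edges) (u : V) : {set V} := [set v | (u, v) \in F].
Definition inN (F : edges) (u : V) : {set V} := [set v | (v, u) \in F].

(* cost of Phase 1: per flooding iteration, one unit plus one unit per edge
   sent to each out-neighbour and per edge received from each in-neighbour;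
   then Tarjan's SCC algorithm + classification: |known edges| + |known vertices|. *)
Definition known_vertices (K : edges) (u : V) : {set V} :=
  u |: [set x | [exists y, ((x, y) \in K) || ((y, x) \in K)]].
Definition p1cost (F : edges) (u : V) : nat :=
  \sum_(k < (stop F u).+1)
     (1 + #|(flood F k).2 u| * #|outN F u|
        + \sum_(v in inN F u) #|(flood F k).2 v|)
  + (#|Kn F u| + #|known_vertices (Kn F u) u|).

Definition isolated_ag F u := is_isolatedIn (Kn F u) u.
Definition src_rep F u := is_sourceIn (Kn F u) u && min_id_in (sccIn (Kn F u) u) u.
Definition tgt_rep F u := is_targetIn (Kn F u) u && min_id_in (sccIn (Kn F u) u) u.

Definition S_set (F : edges) (t : V) : {set V} :=
  [set s | is_sourceIn (Kn F t) s && min_id_in (sccIn (Kn F t) s) s].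
(* target representatives that sent to source representative s *)
Definition P_src (F : edges) (s : V) : {set V} :=
  [set t | tgt_rep F t && (s \in S_set F t)].

(* selection oracle: sel r u A is the element selected by agent u in round r
   among the candidate set A (nondeterministic choice) *)
Variable sel : nat -> V -> {set V} -> V.

Definition fwd_cands (F : edges) (s : V) : {set V} :=
  [set t in P_src F s | 1 < #|S_set F t|].
Definition fwd (F : edges) (s : V) : bool := fwd_cands F s != set0.
(* source representatives that sent (in Phase 3) to target t *)
Definition Q_tgt (F : edges) (r : nat) (t : V) : {set V} :=
  [set s | src_rep F s && fwd F s && (sel r s (fwd_cands F s) == t)].

Definition bk_cands (F : edges) (r : nat) (t : V) : {set V} :=
  [set s in Q_tgt F r t | 1 < #|P_src F s|].

Definition added3 (F : edges) : edges :=
  \bigcup_(s | src_rep F s && ~~ fwd F s) [set (t, s) | t in P_src F s].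
Definition added4 (F : edges) (r : nat) : edges :=
  \bigcup_(t | tgt_rep F t)
     (if bk_cands F r t != set0 then [set (t, sel r t (bk_cands F r t))]
      else [set (t, s) | s in Q_tgt F r t]).

Fixpoint graph_at (E : edges) (r : nat) : edges :=
  match r with
  | 0 => E
  | r'.+1 => let F := graph_at E r' in F :|: added3 F :|: added4 F r'
  end.

Definition p2cost F u := #|Kn F u| + #|S_set F u| * #|S_set F u|.
Definition p3cost F u := 1 + 2 * #|P_src F u|.
Definition p4cost F r u := 1 + #|Q_tgt F r u|.

Definition round_cost (F : edges) (r : nat) (u : V) : nat :=
  p1cost F u
  + (if tgt_rep F u then p2cost F u + p4cost F r u else 0)
  + (if src_rep F u then p3cost F u else 0).

Definition exited_before (E : edges) (r : nat) (u : V) : bool :=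
  [exists r' : 'I_r, isolated_ag (graph_at E r') u].

Definition total_cost (E : edges) (N : nat) (u : V) : nat :=
  \sum_(r < N) (if exited_before E r u then 0 else round_cost (graph_at E r) r u).

End Protocol.

(* Main.v *)
Require Import Defs.
From mathcomp Require Import all_boot zify.
From Stdlib Require Import Classical.
Set Implicit Arguments. Unset Strict Implicit. Unset Printing Implicit Defensive.


Section G1.
Variable n : nat.
Notation V := 'I_n.
Implicit Types (G : {set V * V}) (x y : V).

Definition reach G x y := connect (erel G) x y.

Lemma reach_refl G x : reach G x x.
Proof. exact: connect0. Qed.

Lemma reach_trans G x y z : reach G x y -> reach G y z -> reach G x z.
Proof. exact: connect_trans. Qed.

Lemma reach_edge G x y : (x, y) \in G -> reach G x y.
Proof. by move=> h; apply: connect1. Qed.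

Lemma reach_mono G G' x y : G \subset G' -> reach G x y -> reach G' x y.
Proof.
move=> sub; apply: connect_sub => a b h; apply: connect1.
by rewrite /erel (subsetP sub).
Qed.

Lemma scc_refl G x : x \in sccIn G x.
Proof. by rewrite inE connect0. Qed.

Lemma sccP G x y : reflect (reach G x y /\ reach G y x) (y \in sccIn G x).
Proof. by rewrite inE; apply: andP. Qed.

Arguments sccP {G x y}.

Lemma scc_eq G x y : y \in sccIn G x -> sccIn G y = sccIn G x.
Proof.
move=> /sccP [h1 h2]; apply/setP => z; apply/sccP/sccP => -[a b]; split.
- exact: reach_trans h1 a.
- exact: reach_trans b h2.
- exact: reach_trans h2 a.
- exact: reach_trans b h1.
Qed.

Lemma scc_sym G x y : y \in sccIn G x -> x \in sccIn G y.
Proof. by move=> h; rewrite (scc_eq h) scc_refl. Qed.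

Lemma src_scc G x y : sccIn G x = sccIn G y -> is_sourceIn G x = is_sourceIn G y.
Proof. by rewrite /is_sourceIn /outIn /inIn => ->. Qed.
Lemma tgt_scc G x y : sccIn G x = sccIn G y -> is_targetIn G x = is_targetIn G y.
Proof. by rewrite /is_targetIn /outIn /inIn => ->. Qed.

Lemma noin_closed G (C : {set V}) x y :
  (forall a b, (a, b) \in G -> b \in C -> a \in C) -> reach G y x -> x \in C -> y \in C.
Proof.
move=> cl /connectP [p pth ->]; elim: p y pth => [|z p IH] y //= /andP [e pth] hl.
exact: (cl _ _ e (IH _ pth hl)).
Qed.

Lemma noout_closed G (C : {set V}) x y :
  (forall a b, (a, b) \in G -> a \in C -> b \in C) -> reach G x y -> x \in C -> y \in C.
Proof.
move=> cl /connectP [p pth ->]; elim: p x pth => [|z p IH] x //= /andP [e pth] hx.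
exact: (IH _ pth (cl _ _ e hx)).
Qed.

Lemma scc_noin G x y : inIn G x == set0 -> reach G y x -> y \in sccIn G x.
Proof.
move=> /eqP h0 r; apply: (noin_closed _ r (scc_refl _ _)) => a b e hb.
apply: contraT => ha.
have : (a, b) \in inIn G x by rewrite inE e /= ha hb.
by rewrite h0 inE.
Qed.

Lemma scc_noout G x y : outIn G x == set0 -> reach G x y -> y \in sccIn G x.
Proof.
move=> /eqP h0 r; apply: (noout_closed _ r (scc_refl _ _)) => a b e ha.
apply: contraT => hb.
have : (a, b) \in outIn G x by rewrite inE e /= ha hb.
by rewrite h0 inE.
Qed.

Lemma isolated_SC G x : weakly_connected G -> is_isolatedIn G x -> strongly_connected G.
Proof.
move=> wc /andP [ho hi].
have all_in : forall y, y \in sccIn G x.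
  move=> y; move: (wc x y) => /connectP [p pth ->].
  elim: p x ho hi pth => [|z p IH] x0 ho hi //=; first by rewrite scc_refl.
  move=> /andP [e pth].
  have zin : z \in sccIn G x0.
    case/orP: e => e.
    - exact: scc_noout ho (reach_edge e).
    - exact: scc_noin hi (reach_edge e).
  have eqs := scc_eq zin.
  rewrite -eqs; apply: IH => //.
  + by move: ho; rewrite /outIn eqs.
  + by move: hi; rewrite /inIn eqs.
move=> y z.
have /sccP [_ h1] := all_in y; have /sccP [h2 _] := all_in z.
exact: reach_trans h1 h2.
Qed.

Lemma SC_isolated G x : strongly_connected G -> is_isolatedIn G x.
Proof.
move=> sc.
have hs : sccIn G x = setT by apply/setP => y; rewrite !inE !sc.
rewrite /is_isolatedIn /outIn /inIn hs.
apply/andP; split; apply/eqP/setP => e; rewrite !inE; by case: (e \in G); rewrite ?andbF.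
Qed.

Definition anc G y := #|[set z | reach G z y]|.
Definition desc G y := #|[set z | reach G y z]|.

Lemma src_exists G x : weakly_connected G -> ~ strongly_connected G ->
  exists y, is_sourceIn G y /\ reach G y x.
Proof.
move=> wc nsc.
have [y ry miny] := arg_minnP (P := fun z => reach G z x) (anc G) (reach_refl G x).
exists y; split => //.
have hi : inIn G y == set0.
  apply/eqP/setP => -[a b]; rewrite !inE /=.
  apply/negbTE/negP => /andP [e /andP [ha hb]].
  have ray : reach G a y.
    by apply: reach_trans (reach_edge e) _; by move: hb => /andP [].
  have := miny a (reach_trans ray ry).
  rewrite /anc; apply/negP; rewrite -ltnNge; apply: proper_card.
  rewrite properE; apply/andP; split.
    apply/subsetP => z; rewrite !inE => h; exact: reach_trans h ray.
  apply/subsetPn; exists y; rewrite !inE ?reach_refl //.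
  by apply/negP => h; move/negP: ha; apply; apply/andP; split.
rewrite /is_sourceIn hi andbT.
apply/negP => ho; apply: nsc; apply: (isolated_SC (x := y)) => //.
by rewrite /is_isolatedIn ho hi.
Qed.

Lemma tgt_exists G x : weakly_connected G -> ~ strongly_connected G ->
  exists y, is_targetIn G y /\ reach G x y.
Proof.
move=> wc nsc.
have [y ry miny] := arg_minnP (desc G) (reach_refl G x).
exists y; split => //.
have ho : outIn G y == set0.
  apply/eqP/setP => -[a b]; rewrite !inE /=.
  apply/negbTE/negP => /andP [e /andP [ha hb]].
  have ryb : reach G y b.
    by apply: reach_trans _ (reach_edge e); by move: ha => /andP [].
  have := miny b (reach_trans ry ryb).
  rewrite /desc; apply/negP; rewrite -ltnNge; apply: proper_card.
  rewrite properE; apply/andP; split.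
    apply/subsetP => z; rewrite !inE => h; exact: reach_trans ryb h.
  apply/subsetPn; exists y; rewrite !inE ?reach_refl //.
  by apply/negP => h; move/negP: hb; apply; apply/andP; split.
rewrite /is_targetIn ho /=.
apply/negP => hi; apply: nsc; apply: (isolated_SC (x := y)) => //.
by rewrite /is_isolatedIn ho hi.
Qed.

Variable id : V -> nat.
Hypothesis id_inj : injective id.

Lemma rep_exists (S : {set V}) x : x \in S -> exists2 r, r \in S & min_id_in id S r.
Proof.
move=> xS; have [r rS minr] := arg_minnP id xS.
exists r => //; apply/forall_inP => y yS; exact: minr.
Qed.

Lemma rep_uniq (S : {set V}) r1 r2 : r1 \in S -> r2 \in S ->
  min_id_in id S r1 -> min_id_in id S r2 -> r1 = r2.
Proof.
move=> h1 h2 /forall_inP m1 /forall_inP m2; apply: id_inj; apply/eqP.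
by rewrite eqn_leq m1 ?m2.
Qed.

End G1.
Arguments sccP {n G x y}.


Section G2.
Variable n : nat.
Notation V := 'I_n.
Implicit Types (G : {set V * V}) (x y u v a : V).

Definition kn G k u := (flood G k).1 u.
Definition nw G k u := (flood G k).2 u.

Lemma kn0 G u : kn G 0 u = [set e in G | e.1 == u]. Proof. by []. Qed.
Lemma nw0 G u : nw G 0 u = kn G 0 u. Proof. by []. Qed.
Lemma knS G k u : kn G k.+1 u = kn G k u :|: \bigcup_(v | (v, u) \in G) nw G k v.
Proof. by []. Qed.
Lemma nwS G k u : nw G k.+1 u = kn G k.+1 u :\: kn G k u.
Proof. by []. Qed.

Definition rb G k a u := exists p, [/\ path (erel G) a p, last a p = u & size p <= k].

Lemma rb0 G a u : rb G 0 a u <-> a = u.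
Proof.
split; first by case=> -[|b p] [] //=.
by move=> ->; exists [::].
Qed.

Lemma rb_mono G k a u : rb G k a u -> rb G k.+1 a u.
Proof. by case=> p [h1 h2 h3]; exists p; split => //; apply: leqW. Qed.

Lemma rb_le G k k' a u : k <= k' -> rb G k a u -> rb G k' a u.
Proof. by move=> le [p [h1 h2 h3]]; exists p; split => //; apply: leq_trans le. Qed.

Lemma rb_step G k a v u : rb G k a v -> (v, u) \in G -> rb G k.+1 a u.
Proof.
case=> p [h1 h2 h3] e; exists (rcons p u); split.
- by rewrite rcons_path h1 h2.
- by rewrite last_rcons.
- by rewrite size_rcons ltnS.
Qed.

Lemma rb_cons G k a b u : (a, b) \in G -> rb G k b u -> rb G k.+1 a u.
Proof. by move=> e [p [h1 h2 h3]]; exists (b :: p); split; rewrite /= ?ltnS //; apply/andP; split. Qed.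

Lemma rb_reach G k a u : rb G k a u -> reach G a u.
Proof. by case=> p [h1 h2 _]; apply/connectP; exists p. Qed.

Lemma reach_rb G a u : reach G a u -> rb G n a u.
Proof.
move=> /connectP [p pth ->].
case: (shortenP pth) => p' pth' uq _.
exists p'; split => //.
have := card_uniqP uq; move=> h.
have := max_card (mem (a :: p')); rewrite h card_ord /=.
exact: ltnW.
Qed.

Lemma nw_sub G k u : nw G k u \subset kn G k u.
Proof. by case: k => [|k]; rewrite ?nw0 // nwS subsetDl. Qed.

Lemma kn_sound G k u e : e \in kn G k u -> e \in G /\ rb G k e.1 u.
Proof.
elim: k u e => [|k IH] u e.
  by rewrite kn0 inE => /andP [-> /eqP ->]; split => //; apply/rb0.
rewrite knS inE => /orP [/IH [h1 h2]|/bigcupP [v vu /(subsetP (nw_sub _ _ _)) /IH [h1 h2]]].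
  by split => //; apply: rb_mono.
by split => //; apply: rb_step h2 vu.
Qed.

Lemma kn_char G k u e : e \in kn G k u <-> e \in G /\ rb G k e.1 u.
Proof.
elim: k u e => [|k IH] u e.
  rewrite kn0 inE; split.
    by case/andP => -> /eqP ->; split => //; apply/rb0.
  by case=> -> /rb0 ->; rewrite eqxx.
rewrite knS inE; split.
  case/orP.
    by move/IH => [h1 h2]; split => //; apply: rb_mono.
  move/bigcupP => [v vu]; case: k IH => [|k] IH.
    by rewrite nw0 => /IH [h1 h2]; split => //; apply: rb_step h2 vu.
  by rewrite nwS inE => /andP [_ /IH [h1 h2]]; split => //; apply: rb_step h2 vu.
case=> eG [p [pth lp sz]].
case: (boolP (e \in kn G k u)) => [h|nin]; first by apply/orP; left.
apply/orP; right.
have szk : size p = k.+1.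
  apply/eqP; rewrite eqn_leq sz /= ltnNge; apply/negP => szk.
  by move/negP: nin; apply; apply: (proj2 (IH _ _)); split => //; exists p.
case/lastP: p pth lp sz szk => [|p' w] //.
rewrite rcons_path last_rcons size_rcons => /andP [pth' ew] lw _ [szp]; subst u.
apply/bigcupP; exists (last e.1 p') => //.
have rbk : rb G k e.1 (last e.1 p') by exists p'; split => //; rewrite szp.
case: k IH nin szp rbk => [|k] IH nin szp rbk.
  by rewrite nw0; apply: (proj2 (IH _ _)).
rewrite nwS inE; apply/andP; split; last by apply: (proj2 (IH _ _)).
apply/negP => /kn_sound [_ rbk'].
by move/negP: nin; apply; apply: (proj2 (IH _ _)); split => //; apply: rb_step rbk' ew.
Qed.

Lemma kn_sub G k u : kn G k u \subset G.
Proof. by apply/subsetP => e /kn_char []. Qed.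

Lemma kn_mono G k u : kn G k u \subset kn G k.+1 u.
Proof. by rewrite knS subsetUl. Qed.

Lemma sum_nw G K u : \sum_(k < K.+1) #|nw G k u| = #|kn G K u|.
Proof.
elim: K => [|K IH]; first by rewrite big_ord_recr big_ord0 /= nw0.
rewrite big_ord_recr /= IH nwS cardsD.
have -> : kn G K.+1 u :&: kn G K u = kn G K u.
  by apply/setIidPr; apply: kn_mono.
rewrite subnKC //; apply: subset_leq_card; apply: kn_mono.
Qed.

Lemma Kn_char G u : Kn G u = [set e in G | reach G e.1 u].
Proof.
rewrite /Kn; apply/setP => e; rewrite inE.
apply/idP/idP.
  by move/kn_char => [-> /rb_reach].
case/andP => eG r.
apply/kn_char; split => //.
rewrite /stop; set P := (fun k => _).
case: (boolP (has P (iota 0 n.+1))) => hP; last first.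
  move/hasNfind: hP => ->; rewrite size_iota.
  by apply: rb_mono; apply: reach_rb.
set K := find P (iota 0 n.+1).
have hK : P K.
  have := nth_find 0 hP; rewrite nth_iota ?add0n //.
  by have := hP; rewrite has_find size_iota.
have H : forall a, rb G K.+1 a u -> rb G K a u.
  move=> a [[|b p] [pth lp sz]].
    by move: lp => /= ->; exists [::]; split.
  move: pth => /= /andP [ab pth].
  have : (a, b) \in kn G K.+1 u.
    by apply/kn_char; split => //; exists (b :: p); split => //=; rewrite ab.
  rewrite knS => hin.
  have : (a, b) \in kn G K u.
    have /eqP h0 : nw G K.+1 u == set0 by exact: hK.
    apply: contraT => nin.
    have : (a, b) \in nw G K.+1 u by rewrite nwS inE nin knS.
    by rewrite h0 inE.
  by move/kn_char => [].
move/connectP: r => [p pth lp].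
elim: p e.1 pth lp {eG} => [|b p IHp] a.
  by move=> _ ->; exists [::]; split.
move=> /= /andP [ab pth] lp.
by apply: H; apply: rb_cons ab (IHp _ pth lp).
Qed.

Lemma stop_le G u : stop G u <= n.+1.
Proof. by rewrite /stop; have := find_size (fun k => (flood G k.+1).2 u == set0) (iota 0 n.+1); rewrite size_iota. Qed.

End G2.


Section G3.
Variable n : nat.
Notation V := 'I_n.
Implicit Types (G : {set V * V}) (x y u v a : V).

Lemma Kn_sub G u : Kn G u \subset G.
Proof. by rewrite Kn_char; apply/subsetP => e; rewrite inE => /andP []. Qed.

Lemma reach_Kn G u z y : reach G y u -> reach (Kn G u) z y = reach G z y.
Proof.
move=> yu; apply/idP/idP; first exact: reach_mono (Kn_sub G u).
move=> /connectP [p pth lp].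
elim: p z pth lp => [|b p IH] z /=; first by move=> _ ->; apply: reach_refl.
move=> /andP [zb pth] lp.
apply: (@reach_trans _ _ _ b); last exact: IH.
have zbG : (z, b) \in G by exact: zb.
apply: reach_edge; rewrite Kn_char inE zbG /=.
apply: reach_trans (reach_edge zbG) _; apply: reach_trans yu.
by apply/connectP; exists p.
Qed.

Lemma scc_Kn G u x : reach G x u -> sccIn (Kn G u) x = sccIn G x.
Proof.
move=> xu; apply/setP => y; rewrite !inE.
apply/andP/andP => -[h1 h2].
  by split; apply: reach_mono (Kn_sub G u) _.
have yu : reach G y u by apply: reach_trans h2 xu.
by split; rewrite -/(reach _ _ _) reach_Kn.
Qed.

Lemma outIn_Kn G u x : reach G x u -> outIn (Kn G u) x = outIn G x.
Proof.
move=> xu; rewrite /outIn scc_Kn //; apply/setP => e; rewrite !inE Kn_char inE.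
apply/idP/idP.
  by case/and3P => /andP [eG _] h1 h2; rewrite eG h1 h2.
case/and3P => eG h1 h2; rewrite eG h1 h2 /= andbT.
by case/andP: h1 => _ h; apply: reach_trans h xu.
Qed.

Lemma inIn_Kn G u x : reach G x u -> inIn (Kn G u) x = inIn G x.
Proof.
move=> xu; rewrite /inIn scc_Kn //; apply/setP => e; rewrite !inE Kn_char inE.
apply/idP/idP.
  by case/and3P => /andP [eG _] h1 h2; rewrite eG h1 h2.
case/and3P => eG h1 h2; rewrite eG h1 h2 /= andbT.
apply: (reach_trans (y := e.2)); first by apply: reach_edge; rewrite -surjective_pairing.
by case/andP: h2 => _ h; apply: reach_trans h xu.
Qed.

Lemma src_Kn G u x : reach G x u -> is_sourceIn (Kn G u) x = is_sourceIn G x.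
Proof. by move=> xu; rewrite /is_sourceIn outIn_Kn ?inIn_Kn. Qed.
Lemma tgt_Kn G u x : reach G x u -> is_targetIn (Kn G u) x = is_targetIn G x.
Proof. by move=> xu; rewrite /is_targetIn outIn_Kn ?inIn_Kn. Qed.
Lemma iso_Kn G u x : reach G x u -> is_isolatedIn (Kn G u) x = is_isolatedIn G x.
Proof. by move=> xu; rewrite /is_isolatedIn outIn_Kn ?inIn_Kn. Qed.

Lemma nsrc_Kn G u x : ~~ reach G x u -> ~~ is_sourceIn (Kn G u) x.
Proof.
move=> nxu; rewrite /is_sourceIn negb_and; apply/orP; left; rewrite negbK.
apply/eqP/setP => e; rewrite !inE; apply/negbTE/negP => /andP [eK /andP [h1 _]].
move: eK; rewrite Kn_char inE => /andP [eG e1u].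
move/negP: nxu; apply; apply: reach_trans _ e1u.
by move: h1 => /andP [h _]; apply: reach_mono (Kn_sub G u) h.
Qed.

Variable id : V -> nat.

Definition srep G x := is_sourceIn G x && min_id_in id (sccIn G x) x.
Definition trep G x := is_targetIn G x && min_id_in id (sccIn G x) x.

Lemma src_rep_eq G u : src_rep id G u = srep G u.
Proof. by rewrite /src_rep /srep src_Kn ?scc_Kn //; apply: reach_refl. Qed.
Lemma tgt_rep_eq G u : tgt_rep id G u = trep G u.
Proof. by rewrite /tgt_rep /trep tgt_Kn ?scc_Kn //; apply: reach_refl. Qed.
Lemma iso_eq G u : isolated_ag G u = is_isolatedIn G u.
Proof. by rewrite /isolated_ag iso_Kn //; apply: reach_refl. Qed.

Lemma S_set_eq G t : S_set id G t = [set s | srep G s && reach G s t].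
Proof.
apply/setP => s; rewrite !inE.
case: (boolP (reach G s t)) => h; first by rewrite /srep src_Kn ?scc_Kn ?andbT.
by rewrite andbF (negbTE (nsrc_Kn h)).
Qed.

Lemma P_src_eq G s : P_src id G s = [set t | trep G t && srep G s && reach G s t].
Proof.
by apply/setP => t; rewrite {1}inE tgt_rep_eq S_set_eq !inE andbA.
Qed.

End G3.


Lemma half_card (T U : finType) (f : T -> U) (P : pred T) (A : {set T}) :
  (forall a, a \in A -> P a -> exists2 a', a' \in A & (a' != a) && (f a' == f a)) ->
  2 * #|f @: [set a in A | P a]| <= #|A|.
Proof.
suff H : forall k (A : {set T}), #|A| <= k ->
  (forall a, a \in A -> P a -> exists2 a', a' \in A & (a' != a) && (f a' == f a)) ->
  2 * #|f @: [set a in A | P a]| <= #|A| by apply: H.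
elim=> [|k IH] {}A hk hyp.
  move: hk; rewrite leqn0 => /eqP /cards0_eq ->.
  have -> : [set a in (set0 : {set T}) | P a] = set0 by apply/setP => a; rewrite !inE.
  by rewrite imset0 cards0.
case: (set_0Vmem [set a in A | P a]) => [->|[a0]].
  by rewrite imset0 cards0.
rewrite inE => /andP [a0A Pa0].
have [a' a'A /andP [ne /eqP fa']] := hyp a0 a0A Pa0.
set A' := [set a in A | f a != f a0].
have hsub : f @: [set a in A | P a] \subset f a0 |: f @: [set a in A' | P a].
  apply/subsetP => u /imsetP [a]; rewrite inE => /andP [aA Pa] ->.
  rewrite !inE; case: (boolP (f a == f a0)) => //= h.
  by apply/imsetP; exists a => //; rewrite !inE aA h Pa.
have cardA : #|A'| + 2 <= #|A|.
  rewrite -(cardsID [set a | f a == f a0] A).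
  have -> : A :\: [set a | f a == f a0] = A' by apply/setP => a; rewrite !inE andbC.
  rewrite [X in _ <= X]addnC leq_add2l.
  have : [set a0; a'] \subset A :&: [set a | f a == f a0].
    by apply/subsetP => a; rewrite !inE => /orP [] /eqP ->; rewrite ?a0A ?a'A ?fa' eqxx.
  move/subset_leq_card; rewrite cards2 eq_sym ne.
  by [].
have hyp' : forall a, a \in A' -> P a -> exists2 a2, a2 \in A' & (a2 != a) && (f a2 == f a).
  move=> a; rewrite inE => /andP [aA fa] Pa.
  have [a2 a2A /andP [ne2 /eqP f2]] := hyp a aA Pa.
  by exists a2; rewrite ?inE ?a2A ?f2 ?fa ?ne2 ?eqxx.
have IH' := IH A'.
have : 2 * #|f @: [set a in A' | P a]| <= #|A'|.
  apply: IH' => //.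
  by move: hk cardA; lia.
move=> h.
have h2 := subset_leq_card hsub; rewrite cardsU1 in h2.
have h4 := leq_b1 (f a0 \notin f @: [set a in A' | P a]).
lia.
Qed.

Lemma strict_card (T U : finType) (f : T -> U) (P : pred T) (B : {set T}) t0 :
  t0 \in B ->
  (~~ P t0 \/ exists2 t2, t2 \in B & (t2 != t0) && (f t2 == f t0)) ->
  #|f @: [set t in B | P t]| < #|B|.
Proof.
move=> t0B h.
have sub : f @: [set t in B | P t] \subset f @: (B :\ t0).
  apply/subsetP => u /imsetP [t]; rewrite inE => /andP [tB Pt] ->.
  case: (eqVneq t t0) => [et|nt].
    subst t; case: h => [nP|[t2 t2B /andP [ne /eqP f2]]]; first by rewrite Pt in nP.
    by apply/imsetP; exists t2 => //; rewrite !inE ne t2B.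
  by apply/imsetP; exists t => //; rewrite !inE nt tB.
apply: leq_ltn_trans (subset_leq_card sub) _.
apply: leq_ltn_trans (leq_imset_card _ _) _.
by rewrite (cardsD1 t0 B) t0B.
Qed.

Section G4.
Variable n : nat.
Notation V := 'I_n.
Implicit Types (G : {set V * V}) (x y u v a : V).
Variable id : V -> nat.
Hypothesis id_inj : injective id.

Lemma rep_of G x : exists r, [/\ sccIn G r = sccIn G x, r \in sccIn G x &
  min_id_in id (sccIn G r) r].
Proof.
have [r rin m] := rep_exists id (scc_refl G x).
by exists r; split => //; rewrite (scc_eq rin).
Qed.

Lemma srep_uniq G r1 r2 : min_id_in id (sccIn G r1) r1 -> min_id_in id (sccIn G r2) r2 ->
  r1 \in sccIn G r2 -> r1 = r2.
Proof.
move=> m1 m2 h; rewrite (scc_eq h) in m1.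
by apply: (rep_uniq id_inj h (scc_refl _ _)).
Qed.

Definition repS G := [set x | srep id G x].
Definition repT G := [set x | trep id G x].

Lemma alpha_eq G : alpha G = #|repS G|.
Proof.
rewrite /alpha.
have -> : [set sccIn G x | x in [set x | is_sourceIn G x]] = sccIn G @: repS G.
  apply/setP => C; apply/imsetP/imsetP => -[x]; rewrite inE => hx ->.
    have [r [e rin m]] := rep_of G x.
    exists r; last by rewrite e.
    by rewrite inE /srep m (src_scc e) hx.
  by exists x => //; rewrite inE; case/andP: hx.
rewrite card_in_imset //.
move=> r1 r2; rewrite !inE => /andP [_ m1] /andP [_ m2] e.
by apply: srep_uniq m1 m2 _; rewrite -e scc_refl.
Qed.

Lemma beta_eq G : beta G = #|repT G|.
Proof.
rewrite /beta.
have -> : [set sccIn G x | x in [set x | is_targetIn G x]] = sccIn G @: repT G.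
  apply/setP => C; apply/imsetP/imsetP => -[x]; rewrite inE => hx ->.
    have [r [e rin m]] := rep_of G x.
    exists r; last by rewrite e.
    by rewrite inE /trep m (tgt_scc e) hx.
  by exists x => //; rewrite inE; case/andP: hx.
rewrite card_in_imset //.
move=> r1 r2; rewrite !inE => /andP [_ m1] /andP [_ m2] e.
by apply: srep_uniq m1 m2 _; rewrite -e scc_refl.
Qed.

Lemma alpha_le G : alpha G <= n.
Proof. by rewrite alpha_eq; have := max_card (mem (repS G)); rewrite card_ord. Qed.
Lemma beta_le G : beta G <= n.
Proof. by rewrite beta_eq; have := max_card (mem (repT G)); rewrite card_ord. Qed.

Lemma srep_above G x : weakly_connected G -> ~ strongly_connected G ->
  exists2 r, srep id G r & reach G r x.
Proof.
move=> wc nsc; have [y [sy ry]] := src_exists x wc nsc.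
have [r [e rin m]] := rep_of G y.
exists r; first by rewrite /srep m (src_scc e) sy.
by apply: reach_trans ry; case/sccP: rin.
Qed.

Lemma trep_below G x : weakly_connected G -> ~ strongly_connected G ->
  exists2 r, trep id G r & reach G x r.
Proof.
move=> wc nsc; have [y [ty ry]] := tgt_exists x wc nsc.
have [r [e rin m]] := rep_of G y.
exists r; first by rewrite /trep m (tgt_scc e) ty.
by apply: reach_trans ry _; case/sccP: rin.
Qed.

Lemma alpha_gt0 G : weakly_connected G -> ~ strongly_connected G -> 0 < alpha G.
Proof.
move=> wc nsc; have [x|] := boolP (0 < n); last first.
  rewrite lt0n negbK => /eqP n0; exfalso; apply: nsc => x; by move: (ltn_ord x); rewrite {2}n0.
have [r sr _] := srep_above (Ordinal x) wc nsc.
by rewrite alpha_eq card_gt0; apply/set0Pn; exists r; rewrite inE.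
Qed.

Lemma beta_gt0 G : weakly_connected G -> ~ strongly_connected G -> 0 < beta G.
Proof.
move=> wc nsc; have [x|] := boolP (0 < n); last first.
  rewrite lt0n negbK => /eqP n0; exfalso; apply: nsc => x; by move: (ltn_ord x); rewrite {2}n0.
have [r sr _] := trep_below (Ordinal x) wc nsc.
by rewrite beta_eq card_gt0; apply/set0Pn; exists r; rewrite inE.
Qed.

Lemma n_le_E G : weakly_connected G -> ~ strongly_connected G -> n <= 2 * #|G|.
Proof.
move=> wc nsc.
have cov : [set: V] \subset [set e.1 | e in G] :|: [set e.2 | e in G].
  apply/subsetP => x _.
  have [y xy] : exists y, y != x.
    case: (pickP (fun y => y != x)) => [y hy|h]; first by exists y.
    exfalso; apply: nsc => a b.
    have := h a; have := h b; rewrite /= => /negbFE/eqP -> /negbFE/eqP ->; exact: connect0.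
  move: (wc x y) => /connectP [[|z p] /= pth ly]; first by rewrite ly eqxx in xy.
  case/andP: pth => /orP [] e _; rewrite !inE.
    by apply/orP; left; apply/imsetP; exists (x, z).
  by apply/orP; right; apply/imsetP; exists (z, x).
have := subset_leq_card cov; rewrite cardsT card_ord => h.
apply: leq_trans h _; apply: leq_trans (leq_card_setU _ _) _.
by rewrite mul2n -addnn leq_add ?leq_imset_card.
Qed.

End G4.


Section G5.
Variable n : nat.
Notation V := 'I_n.
Implicit Types (G F : {set V * V}) (x y u v a : V).
Variable id : V -> nat.
Hypothesis id_inj : injective id.
Variable sel : nat -> V -> {set V} -> V.
Hypothesis sel_in : forall r u (A : {set V}), A != set0 -> sel r u A \in A.

Lemma wc_all G (X : {set V}) x0 : weakly_connected G -> x0 \in X ->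
  (forall a b, (a, b) \in G -> a \in X -> b \in X) ->
  (forall a b, (a, b) \in G -> b \in X -> a \in X) -> forall y, y \in X.
Proof.
move=> wc x0X f b y; move: (wc x0 y) => /connectP [p pth ->].
elim: p x0 x0X pth => [|z p IH] x x0X //= /andP [/orP [] e pth]; apply: IH pth.
  exact: f e x0X.
exact: b e x0X.
Qed.

Lemma mem_added3 F e : e \in added3 id F ->
  [/\ srep id F e.2, ~~ fwd id F e.2 & e.1 \in P_src id F e.2].
Proof.
move=> /bigcupP [s /andP [hs hf] /imsetP [t tin ->]] /=.
by rewrite -src_rep_eq.
Qed.

Lemma added3_in F s t : srep id F s -> ~~ fwd id F s -> t \in P_src id F s ->
  (t, s) \in added3 id F.
Proof.
move=> hs hf ht; apply/bigcupP; exists s; first by rewrite src_rep_eq hs.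
by apply/imsetP; exists t.
Qed.

Lemma mem_Q F r t s : s \in Q_tgt id sel F r t =
  [&& srep id F s, fwd id F s & sel r s (fwd_cands id F s) == t].
Proof. by rewrite inE src_rep_eq andbA. Qed.

Lemma mem_added4 F r e : e \in added4 id sel F r ->
  trep id F e.1 /\ e.2 \in Q_tgt id sel F r e.1.
Proof.
move=> /bigcupP [t ht]; rewrite -tgt_rep_eq; case: ifP => hb.
  rewrite inE => /eqP -> /=; split => //.
  by have := sel_in r t hb; rewrite inE => /andP [].
by move=> /imsetP [s sin ->].
Qed.

Lemma added4_bk F r t : trep id F t -> bk_cands id sel F r t != set0 ->
  (t, sel r t (bk_cands id sel F r t)) \in added4 id sel F r.
Proof.
move=> ht hb; apply/bigcupP; exists t; first by rewrite tgt_rep_eq.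
by rewrite hb inE.
Qed.

Lemma added4_Q F r t s : trep id F t -> bk_cands id sel F r t == set0 ->
  s \in Q_tgt id sel F r t -> (t, s) \in added4 id sel F r.
Proof.
move=> ht hb hs; apply/bigcupP; exists t; first by rewrite tgt_rep_eq.
by rewrite hb; apply/imsetP; exists s.
Qed.

Lemma card_added3 F : #|added3 id F| <= n.
Proof.
have hS : forall e, e \in added3 id F -> e.2 \in S_set id F e.1 /\ #|S_set id F e.1| <= 1.
  move=> e /mem_added3 [hs hf hp]; split.
    by move: hp; rewrite inE => /andP [].
  rewrite leqNgt; apply/negP => h; move/negP: hf; apply.
  by apply/set0Pn; exists e.1; rewrite inE hp h.
rewrite -(@card_in_imset _ _ fst); last first.
  move=> [t1 s1] [t2 s2] m1 m2 /= e12; subst t2.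
  have [a1 c1] := hS _ m1; have [a2 _] := hS _ m2.
  by congr (_, _); move/card_le1_eqP: c1; apply.
by have := max_card (mem (fst @: added3 id F)); rewrite card_ord.
Qed.

Lemma card_added4 F r : #|added4 id sel F r| <= n.
Proof.
rewrite -(@card_in_imset _ _ snd); last first.
  move=> [t1 s1] [t2 s2] /mem_added4 [_ m1] /mem_added4 [_ m2] /= e12; subst s2.
  move: m1 m2; rewrite /= !mem_Q => /and3P [_ _ /eqP e1] /and3P [_ _ /eqP e2]; congruence.
by have := max_card (mem (snd @: added4 id sel F r)); rewrite card_ord.
Qed.

Definition nextg F r := F :|: added3 id F :|: added4 id sel F r.

Lemma nextg_sub F r : F \subset nextg F r.
Proof. by rewrite /nextg -setUA subsetUl. Qed.

Lemma card_nextg F r : #|nextg F r| <= #|F| + 2 * n.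
Proof.
rewrite /nextg; apply: leq_trans (leq_card_setU _ _) _.
have [h _] := leq_card_setU F (added3 id F); move: h.
have := card_added3 F; have := card_added4 F r.
lia.
Qed.


Section Round.
Variables (F : {set V * V}) (r : nat).
Hypothesis wc : weakly_connected F.
Hypothesis nsc : ~ strongly_connected F.
Local Notation F' := (nextg F r).
Local Notation D := (added4 id sel F r).
Local Notation sg s := (sel r s (fwd_cands id F s)).

Lemma reachF' x y : reach F x y -> reach F' x y.
Proof. exact: reach_mono (nextg_sub F r). Qed.

Lemma caseA s0 : srep id F s0 -> ~~ fwd id F s0 -> strongly_connected F'.
Proof.
move=> hs hf.
have allr : forall y, y \in [set y | reach F s0 y].
  apply: (wc_all wc (x0 := s0)); first by rewrite inE reach_refl.
    by move=> a b e; rewrite !inE => h; exact: reach_trans h (reach_edge e).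
  move=> a b e; rewrite !inE => hb.
  have [rr hr ra] := srep_above id a wc nsc.
  have [t ht bt] := trep_below id b wc nsc.
  have tP : t \in P_src id F s0 by rewrite P_src_eq inE ht hs (reach_trans hb bt).
  have c1 : #|S_set id F t| <= 1.
    rewrite leqNgt; apply/negP => h; move/negP: hf; apply; apply/set0Pn.
    by exists t; rewrite inE tP h.
  have r1 : rr \in S_set id F t.
    by rewrite S_set_eq inE hr (reach_trans ra (reach_trans (reach_edge e) bt)).
  have r2 : s0 \in S_set id F t by rewrite S_set_eq inE hs (reach_trans hb bt).
  by have := card_le1_eqP c1 _ _ r1 r2 => ->.
move=> x y.
have [t ht xt] := trep_below id x wc nsc.
have tP : t \in P_src id F s0.
  by rewrite P_src_eq inE ht hs /=; move: (allr t); rewrite inE.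
have e : (t, s0) \in F' by rewrite /nextg !inE (added3_in hs hf tP) orbT.
apply: reach_trans (reachF' xt) _; apply: reach_trans (reach_edge e) _.
by apply: reachF'; move: (allr y); rewrite inE.
Qed.

Lemma src'_rep x : is_sourceIn F' x ->
  exists2 r0, r0 \in repS id F & is_sourceIn F' r0 && (sccIn F' r0 == sccIn F' x).
Proof.
move=> hx; have [r0 hr rx] := srep_above id x wc nsc.
have : r0 \in sccIn F' x by apply: scc_noin (reachF' rx); case/andP: hx.
move=> /scc_eq e; exists r0; first by rewrite inE.
by rewrite e (src_scc e) hx eqxx.
Qed.

Lemma tgt'_rep x : is_targetIn F' x ->
  exists2 r0, r0 \in repT id F & is_targetIn F' r0 && (sccIn F' r0 == sccIn F' x).
Proof.
move=> hx; have [r0 hr rx] := trep_below id x wc nsc.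
have : r0 \in sccIn F' x by apply: scc_noout (reachF' rx); case/andP: hx.
move=> /scc_eq e; exists r0; first by rewrite inE.
by rewrite e (tgt_scc e) hx eqxx.
Qed.

Section AllFwd.
Hypothesis allfwd : forall s, srep id F s -> fwd id F s.

Lemma sigma_P s : srep id F s -> sg s \in P_src id F s /\ 1 < #|S_set id F (sg s)|.
Proof. by move=> hs; have := sel_in r s (allfwd hs); rewrite inE => /andP. Qed.

Lemma D_facts e : e \in D -> [/\ srep id F e.2, trep id F e.1, sg e.2 = e.1 & reach F e.2 e.1].
Proof.
move=> /mem_added4 [ht]; rewrite mem_Q => /and3P [hs _ /eqP he]; split => //.
have [tP _] := sigma_P hs; move: tP; rewrite he P_src_eq inE => /andP [_ ->] //.
Qed.

Lemma added3_0 : added3 id F = set0.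
Proof.
apply/setP => e; rewrite inE; apply/negP => /mem_added3 [hs hf _].
by rewrite allfwd in hf.
Qed.

Lemma memF' e : (e \in F') = (e \in F) || (e \in D).
Proof. by rewrite /nextg added3_0 setU0 inE. Qed.

Definition AD := [set s in repS id F | (sg s, s) \in D].

Lemma card_D : #|D| <= #|AD|.
Proof.
apply: leq_trans (_ : #|[set (sg s, s) | s in AD]| <= _); last exact: leq_imset_card.
apply: subset_leq_card; apply/subsetP => e eD.
have [hs ht hsg _] := D_facts eD.
apply/imsetP; exists e.2.
  by rewrite !inE hs /= hsg -surjective_pairing.
by rewrite hsg -surjective_pairing.
Qed.

Lemma AD_gt0 : 0 < #|AD|.
Proof.
have := alpha_gt0 id_inj wc nsc; rewrite (alpha_eq id_inj) card_gt0 => /set0Pn [s]; rewrite inE => hs.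
have [tP big] := sigma_P hs.
have ht : trep id F (sg s) by move: tP; rewrite P_src_eq inE => /andP [/andP []].
have sQ : s \in Q_tgt id sel F r (sg s) by rewrite mem_Q hs allfwd // eqxx.
rewrite card_gt0; apply/set0Pn.
case: (boolP (bk_cands id sel F r (sg s) == set0)) => hb.
  by exists s; rewrite !inE hs /= (added4_Q ht hb sQ).
have hD := added4_bk ht hb.
have [hs' _ hsg _] := D_facts hD.
exists (sel r (sg s) (bk_cands id sel F r (sg s))).
by rewrite !inE hs' /= hsg.
Qed.

Lemma half_hyp a : a \in AD -> is_sourceIn F' a ->
  exists2 a', a' \in AD & (a' != a) && (sccIn F' a' == sccIn F' a).
Proof.
rewrite !inE => /andP [ha aD] hsa.
have [tP big] := sigma_P ha.
have : 0 < #|S_set id F (sg a) :\ a|.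
  by move: big; rewrite (cardsD1 a); case: (_ \in _) => /=; rewrite ?add1n ?add0n // => /ltnW.
rewrite card_gt0 => /set0Pn [a'].
rewrite in_setD1 S_set_eq inE => /andP [na' /andP [ha' ra']].
have hr : reach F' a' a.
  apply: reach_trans (reachF' ra') _; apply: reach_edge.
  by rewrite memF' aD orbT.
have a'in : a' \in sccIn F' a by apply: scc_noin hr; case/andP: hsa.
have a'D : (sg a', a') \in D.
  apply: contraT => nD.
  have : a \in sccIn F a'.
    apply: (noin_closed (G := F') (x := a')) _ _ (scc_refl _ _).
      move=> x y; rewrite memF' => /orP [e|e] hy.
        apply: scc_noin; first by case/andP: ha' => /andP [].
        by apply: reach_trans (reach_edge e) _; case/sccP: hy.
      have [sy _ hsg _] := D_facts e.
      have yeq : y = a'.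
        apply: (srep_uniq id_inj) hy; first by case/andP: sy.
        by case/andP: ha'.
      by move: nD; rewrite -yeq hsg -surjective_pairing e.
    by have := scc_sym a'in; case/sccP.
  move=> ain; have : a = a'.
    by apply: (srep_uniq id_inj) ain; [case/andP: ha|case/andP: ha'].
  by move=> eaa; rewrite eaa eqxx in na'.
exists a'; first by rewrite !inE ha' a'D.
by rewrite na' (scc_eq a'in) eqxx.
Qed.

Lemma alpha_step : 2 * alpha F' + #|AD| <= 2 * alpha F.
Proof.
set A := repS id F.
have ADsub : AD \subset A by apply/subsetP => s; rewrite inE => /andP [].
have sub : [set sccIn F' x | x in [set x | is_sourceIn F' x]] \subset
    sccIn F' @: (A :\: AD) :|: sccIn F' @: [set s in AD | is_sourceIn F' s].
  apply/subsetP => C /imsetP [x]; rewrite inE => hx ->.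
  have [r0 r0A /andP [hs /eqP e]] := src'_rep hx.
  rewrite inE; case: (boolP (r0 \in AD)) => h.
    by apply/orP; right; apply/imsetP; exists r0; [rewrite in_set h hs | rewrite e].
  by apply/orP; left; apply/imsetP; exists r0; [rewrite in_setD h r0A | rewrite e].
have h1 := subset_leq_card sub.
have [h2 _] := leq_card_setU (sccIn F' @: (A :\: AD)) (sccIn F' @: [set s in AD | is_sourceIn F' s]).
have h3 := leq_imset_card (sccIn F') (A :\: AD).
have h4 := half_card half_hyp.
have h5 : #|A :\: AD| = #|A| - #|AD|.
  by rewrite cardsD (setIidPr ADsub).
have h6 := subset_leq_card ADsub.
rewrite /alpha in h1 *; rewrite -/(alpha F) (alpha_eq id_inj).
rewrite -/A; lia.
Qed.

Lemma caseC : (forall s, srep id F s -> #|P_src id F s| <= 1) -> strongly_connected F'.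
Proof.
move=> small.
have := alpha_gt0 id_inj wc nsc; rewrite (alpha_eq id_inj) card_gt0 => /set0Pn [s0]; rewrite inE => hs0.
have [tP _] := sigma_P hs0.
set t := sg s0.
have ht : trep id F t by move: tP; rewrite P_src_eq inE => /andP [/andP []].
have allr : forall y, y \in [set y | reach F y t].
  apply: (wc_all wc (x0 := t)); first by rewrite inE reach_refl.
    move=> a b e; rewrite !inE => ha.
    have [rr hr ra] := srep_above id a wc nsc.
    have [t2 ht2 bt2] := trep_below id b wc nsc.
    have p1 : t \in P_src id F rr by rewrite P_src_eq inE ht hr (reach_trans ra ha).
    have p2 : t2 \in P_src id F rr.
      by rewrite P_src_eq inE ht2 hr (reach_trans ra (reach_trans (reach_edge e) bt2)).
    by have := card_le1_eqP (small _ hr) _ _ p1 p2 => <-.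
  by move=> a b e; rewrite !inE => hb; apply: reach_trans (reach_edge e) hb.
have sgt : forall s, srep id F s -> sg s = t.
  move=> s hs; have [p1 _] := sigma_P hs.
  have p2 : t \in P_src id F s by rewrite P_src_eq inE ht hs /=; move: (allr s); rewrite inE.
  by have := card_le1_eqP (small _ hs) _ _ p1 p2.
have hb : bk_cands id sel F r t == set0.
  apply/eqP/setP => s; rewrite in_set0 [in LHS]in_set; apply/negbTE; rewrite negb_and -leqNgt.
  case: (boolP (srep id F s)) => hs; first by rewrite small ?orbT.
  by rewrite mem_Q (negbTE hs).
move=> x y.
have [s hs sy] := srep_above id y wc nsc.
have sQ : s \in Q_tgt id sel F r t by rewrite mem_Q hs allfwd // sgt // eqxx.
have e : (t, s) \in F' by rewrite memF' (added4_Q ht hb sQ) orbT.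
apply: reach_trans (reachF' _) _; first by move: (allr x); rewrite inE; exact.
by apply: reach_trans (reach_edge e) (reachF' sy).
Qed.

Lemma beta_step : ~ strongly_connected F' -> beta F' < beta F.
Proof.
move=> nsc'.
have [s hs big] : exists2 s, srep id F s & 1 < #|P_src id F s|.
  case: (boolP [exists s, srep id F s && (1 < #|P_src id F s|)]).
    by move=> /existsP [s /andP [hs big]]; exists s.
  move=> /existsPn h; exfalso; apply: nsc'; apply: caseC.
  by move=> s hs; have := h s; rewrite hs /= -leqNgt.
have [tP _] := sigma_P hs.
set t0 := sg s.
have ht0 : trep id F t0 by move: tP; rewrite P_src_eq inE => /andP [/andP []].
have sQ : s \in Q_tgt id sel F r t0 by rewrite mem_Q hs allfwd // eqxx.
have hbk : bk_cands id sel F r t0 != set0.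
  by apply/set0Pn; exists s; rewrite in_set sQ big.
set ss := sel r t0 (bk_cands id sel F r t0).
have := sel_in r t0 hbk; rewrite -/ss in_set => /andP [ssQ ssbig].
have eD : (t0, ss) \in D by apply: added4_bk.
have : 0 < #|P_src id F ss :\ t0|.
  by move: ssbig; rewrite (cardsD1 t0); case: (_ \in _) => /=; rewrite ?add1n ?add0n // => /ltnW.
rewrite card_gt0 => /set0Pn [t2]; rewrite in_setD1 P_src_eq inE => /andP [nt2 /andP [/andP [ht2 _] rt2]].
have hr : reach F' t0 t2.
  apply: reach_trans (reach_edge _) (reachF' rt2); by rewrite memF' eD orbT.
have sub : [set sccIn F' x | x in [set x | is_targetIn F' x]] \subset
    sccIn F' @: [set t in repT id F | is_targetIn F' t].
  apply/subsetP => C /imsetP [x]; rewrite inE => hx ->.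
  have [r0 r0B /andP [hs0 /eqP e]] := tgt'_rep hx.
  by apply/imsetP; exists r0; [rewrite in_set r0B hs0 | rewrite e].
have h1 := subset_leq_card sub.
have h2 : #|sccIn F' @: [set t in repT id F | is_targetIn F' t]| < #|repT id F|.
  apply: (strict_card (t0 := t0)); first by rewrite inE.
  case: (boolP (is_targetIn F' t0)) => h; [right | by left].
  have t2in : t2 \in sccIn F' t0 by apply: scc_noout hr; case/andP: h.
  by exists t2; [rewrite inE | rewrite nt2 (scc_eq t2in) eqxx].
rewrite /beta in h1 *; rewrite -/(beta F) (beta_eq id_inj).
exact: leq_ltn_trans h1 h2.
Qed.

End AllFwd.

Lemma round_step : strongly_connected F' \/
  [/\ alpha F' < alpha F, beta F' < beta F & #|F'| + 2 * alpha F' <= #|F| + 2 * alpha F].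
Proof.
case: (boolP [exists s, srep id F s && ~~ fwd id F s]).
  by move=> /existsP [s /andP [hs hf]]; left; apply: caseA hs hf.
move=> /existsPn h.
have allfwd : forall s, srep id F s -> fwd id F s.
  by move=> s hs; have := h s; rewrite hs /= negbK.
case: (classic (strongly_connected F')) => hsc; [by left | right].
have h1 := alpha_step allfwd.
have h0 := AD_gt0 allfwd.
have h3 := card_D allfwd.
have h4 : #|F'| <= #|F| + #|D|.
  have -> : F' = F :|: D by rewrite /nextg (added3_0 allfwd) setU0.
  by have [hh _] := leq_card_setU F D.
split; [lia | exact: beta_step | lia].
Qed.
End Round.

Lemma wc_nextg F r : weakly_connected F -> weakly_connected (nextg F r).
Proof.
move=> wc x y; apply: connect_sub (wc x y) => a b /orP [] e; apply: connect1; apply/orP;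
  [left|right]; exact: (subsetP (nextg_sub F r)).
Qed.

Lemma sc_nextg F r : strongly_connected F -> strongly_connected (nextg F r).
Proof. by move=> sc x y; apply: reach_mono (nextg_sub F r) (sc x y). Qed.

End G5.


Section G6.
Variable n : nat.
Notation V := 'I_n.
Implicit Types (G F : {set V * V}) (x y u v a : V).

Lemma card_le_n (A : {set V}) : #|A| <= n.
Proof. by have := max_card (mem A); rewrite card_ord. Qed.

Lemma p1_bound F u : p1cost F u <= (n + 2) + 2 * n * #|F| + #|F| + n.
Proof.
rewrite /p1cost; set K := stop F u.
rewrite !big_split /= big_const_ord iter_addn_0 mul1n.
rewrite -big_distrl /= sum_nw.
rewrite exchange_big /=.
have h3 : \sum_(v in inN F u) \sum_(k < K.+1) #|(flood F k).2 v| <= n * #|F|.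
  apply: leq_trans (_ : \sum_(v in inN F u) #|F| <= _).
    apply: leq_sum => v _; rewrite (sum_nw F K v); apply: subset_leq_card; exact: kn_sub.
  by rewrite sum_nat_const leq_mul2r card_le_n orbT.
have h2 : #|kn F K u| * #|outN F u| <= #|F| * n.
  by apply: leq_mul; [apply: subset_leq_card; exact: kn_sub | exact: card_le_n].
have h1 : K <= n.+1 by exact: stop_le.
have h4 : #|Kn F u| <= #|F| by apply: subset_leq_card; exact: Kn_sub.
have h5 := card_le_n (known_vertices (Kn F u) u).
set S := (\sum_(j in _) _) in h3 *.
set ab := #|kn F K u| * #|outN F u| in h2 *.
set FF := #|F| in h2 h3 h4 *.
set c := #|Kn F u| in h4 *. set d := #|known_vertices _ _| in h5 *.
lia.
Qed.

Variable id : V -> nat.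
Variable sel : nat -> V -> {set V} -> V.

Lemma round_bound F r u :
  round_cost id sel F r u <= 2 * n * #|F| + 2 * #|F| + n * n + 5 * n + 5.
Proof.
rewrite /round_cost.
have h1 := p1_bound F u.
have h2 : p2cost id F u <= #|F| + n * n.
  rewrite /p2cost; have := card_le_n (S_set id F u).
  have : #|Kn F u| <= #|F| by apply: subset_leq_card; exact: Kn_sub.
  nia.
have h3 : p3cost id F u <= 1 + 2 * n by rewrite /p3cost; have := card_le_n (P_src id F u); lia.
have h4 : p4cost id sel F r u <= 1 + n by rewrite /p4cost; have := card_le_n (Q_tgt id sel F r u); lia.
case: (tgt_rep id F u); case: (src_rep id F u); nia.
Qed.

End G6.


Section G7.
Variable n : nat.
Notation V := 'I_n.
Variable id : V -> nat.
Hypothesis id_inj : injective id.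
Variable sel : nat -> V -> {set V} -> V.
Hypothesis sel_in : forall r u (A : {set V}), A != set0 -> sel r u A \in A.
Variable E : {set V * V}.
Hypothesis wc : weakly_connected E.
Hypothesis nsc : ~ strongly_connected E.
Variable u : V.

Local Notation gE r := (graph_at id sel E r).
Local Notation m := (minn (alpha E) (beta E)).

Lemma gS r : gE r.+1 = nextg id sel (gE r) r.
Proof. by []. Qed.

Lemma wc_g r : weakly_connected (gE r).
Proof. by elim: r => [|r IH] //; rewrite gS; apply: wc_nextg. Qed.

Lemma inv r : ~ strongly_connected (gE r) ->
  [/\ alpha (gE r) + r <= alpha E, beta (gE r) + r <= beta E &
      #|gE r| + 2 * alpha (gE r) <= #|E| + 2 * alpha E].
Proof.
elim: r => [|r IH] nscr; first by rewrite !addn0.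
have nscr' : ~ strongly_connected (gE r).
  by move=> h; apply: nscr; rewrite gS; apply: sc_nextg.
have [h1 h2 h3] := IH nscr'.
case: (@round_step n id id_inj sel sel_in (gE r) r (wc_g r) nscr') => [h|[k1 k2 k3]].
  by exfalso; apply: nscr; rewrite gS.
rewrite gS; split; lia.
Qed.

Lemma sc_m : strongly_connected (gE m).
Proof.
apply: NNPP => h.
have [h1 h2 _] := inv h.
have a1 := alpha_gt0 id_inj (wc_g m) h.
have b1 := beta_gt0 id_inj (wc_g m) h.
lia.
Qed.

Lemma exited_after r : m < r -> exited_before id sel E r u.
Proof.
move=> mr; apply/existsP; exists (Ordinal mr) => /=.
by rewrite iso_eq; apply: SC_isolated sc_m.
Qed.

Definition X := #|E| + 2 * alpha E + 2 * n.

Lemma card_g r : ~~ exited_before id sel E r u -> #|gE r| <= X.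
Proof.
move=> nex; rewrite /X.
case: (classic (strongly_connected (gE r))) => h; last first.
  by have [_ _ h3] := inv h; lia.
case: r nex h => [|r] nex h; first by exfalso; apply: nsc.
case: (classic (strongly_connected (gE r))) => h'.
  exfalso; move/negP: nex; apply; apply/existsP; exists (Ordinal (ltnSn r)) => /=.
  by rewrite iso_eq; apply: SC_isolated h'.
have [_ _ h3] := inv h'.
have := @card_nextg n id sel sel_in (gE r) r; rewrite -gS.
lia.
Qed.

Definition B := 2 * n * X + 2 * X + n * n + 5 * n + 5.

Lemma total_le N : total_cost id sel E N u <= minn N m.+1 * B.
Proof.
rewrite /total_cost; elim: N => [|N IH]; first by rewrite big_ord0.
rewrite big_ord_recr /=.
case: ifP => hex.
  rewrite addn0; apply: leq_trans IH _; rewrite leq_mul2r; apply/orP; right; lia.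
have hN : N <= m by rewrite leqNgt; apply/negP => /exited_after; rewrite hex.
have hc := card_g (negbT hex).
have hr := round_bound id sel (gE N) N u.
have hB : round_cost id sel (gE N) N u <= B.
  apply: leq_trans hr _; rewrite /B.
  set x := X in hc *; set y := #|gE N| in hc *.
  nia.
have -> : minn N.+1 m.+1 = (minn N m.+1).+1 by rewrite !minnE; lia.
rewrite mulSn [X in _ <= X]addnC; exact: leq_add IH hB.
Qed.

Lemma final_bound N : total_cost id sel E N u <= 200 * (n * #|E| * m).
Proof.
apply: leq_trans (total_le N) _.
have a1 := alpha_gt0 id_inj wc nsc.
have b1 := beta_gt0 id_inj wc nsc.
have al := alpha_le id_inj E.
have ne := n_le_E wc nsc.
have m1 : 1 <= m by rewrite leq_min a1 b1.
have e1 : 1 <= #|E| by lia.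
have hX : X <= 9 * #|E| by rewrite /X; lia.
have hB : B <= 53 * (n * #|E|).
  rewrite /B; set e := #|E| in hX ne e1 *; set x := X in hX *.
  nia.
apply: leq_trans (_ : m.+1 * B <= _).
  by rewrite leq_mul2r geq_minr orbT.
set e := #|E| in hB *; set b := B in hB *; set mm := m in m1 *.
nia.
Qed.

End G7.


Theorem theorem2 :
  exists C : nat,
  forall (n : nat) (id : 'I_n -> nat) (E : {set 'I_n * 'I_n})
         (sel : nat -> 'I_n -> {set 'I_n} -> 'I_n),
    injective id ->
    loopless E ->
    weakly_connected E ->
    ~ strongly_connected E ->
    (forall r u (A : {set 'I_n}), A != set0 -> sel r u A \in A) ->
    forall (u : 'I_n) (N : nat),
      total_cost id sel E N u <= C * (n * #|E| * minn (alpha E) (beta E)).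
Proof.
exists 200 => n id E sel inj _ wc nsc selin u N.
exact: (final_bound inj selin wc nsc u N).
Qed.
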